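(* Let $\mathbf v_1,\dots,\mathbf v_k\in\mathbb R^d$ be unit vectors with $\mathbf v_i^T\mathbf v_j=\beta$ for all $i\neq j$, where $\beta\in[0,1]$. Then $\bar{\mathbf w}=\frac{\sum_{j=1}^k\mathbf v_j}{\|\sum_{j=1}^k\mathbf v_j\|_2}$ is a fixed point of the ODE $\frac{d}{dt}\mathbf w=-(I_d-\mathbf w\mathbf w^T)\nabla L(\mathbf w)$, i.e. $(I_d-\bar{\mathbf w}\bar{\mathbf w}^T)\nabla L(\bar{\mathbf w})=0$.
   Context: Let $h_p$ be the probabilist's Hermite polynomials normalized to be orthonormal in $L^2$ of the standard Gaussian measure. Let $\sigma=\sum_{p\ge1}a_ph_p$, $\sigma^*=\sum_{p\ge1}b_ph_p$ be square integrable w.r.t. the standard Gaussian, $p^*=\min\{p:b_p\neq0\}$, $c_p=a_pb_p$, with $c_p\ge0$ for $p\ge p^*$, $c_{p^*}>0$ and the relevant series converging. The loss is $L(\mathbf w)=C-\mathbb E_{\mathbf x\sim\mathcal N(0,I_d)}\big[\sigma(\mathbf w^T\mathbf x)\sum_{j=1}^k\sigma^*(\mathbf v_j^T\mathbf x)\big]$, which for unit $\mathbf w$ equals $C-\sum_{p\ge p^*}c_p\sum_j(\mathbf v_j^T\mathbf w)^p$; this formula defines $L$ and its Euclidean gradient $\nabla L$ on $\mathbb R^d$. *)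

(* Defs.v *)
From HB Require Import structures.
From mathcomp Require Import all_boot all_order all_algebra.
From mathcomp Require Import all_classical all_reals all_analysis.
Set Implicit Arguments. Unset Strict Implicit. Unset Printing Implicit Defensive.
Import Order.TTheory GRing.Theory Num.Theory numFieldNormedType.Exports.
Local Open Scope ring_scope.

Definition dotv {R : realType} {d : nat} (u v : 'cV[R]_d) : R := (u^T *m v) 0 0.
Definition normv {R : realType} {d : nat} (u : 'cV[R]_d) : R := Num.sqrt (dotv u u).

(* The loss, for unit w:  L(w) = C - sum_{p} c_p sum_j (v_j^T w)^p
   (c p = a_p b_p, which vanishes for p < pstar). *)
Definition lossL {R : realType} {d k : nat} (C : R) (c : nat -> R)
  (v : 'I_k -> 'cV[R]_d) (w : 'cV[R]_d) : R :=
  C - limn (series (fun p => c p * \sum_(j < k) (dotv (v j) w) ^+ p)).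

(* p-th term of the i-th coordinate of the Euclidean gradient of the formula
   above:  - p c_p sum_j (v_j^T w)^(p-1) (v_j)_i  (the p = 0 term is 0). *)
Definition grad_term {R : realType} {d k : nat} (c : nat -> R)
  (v : 'I_k -> 'cV[R]_d) (w : 'cV[R]_d) (i : 'I_d) (p : nat) : R :=
  - (p%:R * c p * \sum_(j < k) (dotv (v j) w) ^+ p.-1 * v j i 0).

Definition gradL {R : realType} {d k : nat} (c : nat -> R)
  (v : 'I_k -> 'cV[R]_d) (w : 'cV[R]_d) : 'cV[R]_d :=
  \col_i limn (series (grad_term c v w i)).

(* Main.v *)
Require Import Defs.
From HB Require Import structures.
From mathcomp Require Import all_boot all_order all_algebra.
From mathcomp Require Import all_classical all_reals all_analysis.
From mathcomp Require Import ring lra.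
Import Order.TTheory GRing.Theory Num.Theory numFieldNormedType.Exports.
Local Open Scope ring_scope.
Set Implicit Arguments. Unset Strict Implicit.

Section H.
Variables (R : realType) (d : nat).
Implicit Types u w : 'cV[R]_d.

Lemma dotvE u w : dotv u w = \sum_i u i 0 * w i 0.
Proof. by rewrite /dotv mxE; apply: eq_bigr => i _; rewrite mxE. Qed.

Lemma dotvC u w : dotv u w = dotv w u.
Proof. by rewrite !dotvE; apply: eq_bigr => i _; rewrite mulrC. Qed.

Lemma dotvZr u w a : dotv u (a *: w) = a * dotv u w.
Proof. by rewrite !dotvE mulr_sumr; apply: eq_bigr => i _; rewrite mxE mulrCA. Qed.

Lemma dotvZl u w a : dotv (a *: u) w = a * dotv u w.
Proof. by rewrite dotvC dotvZr dotvC. Qed.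

Lemma dotv_sumr k u (f : 'I_k -> 'cV[R]_d) :
  dotv u (\sum_j f j) = \sum_j dotv u (f j).
Proof.
rewrite dotvE; under eq_bigr do rewrite summxE mulr_sumr.
by rewrite exchange_big /=; apply: eq_bigr => j _; rewrite dotvE.
Qed.

Lemma dotv_ge0 u : 0 <= dotv u u.
Proof. by rewrite dotvE; apply: sumr_ge0 => i _; rewrite -expr2 sqr_ge0. Qed.

Lemma dotv_eq0 u : dotv u u = 0 -> u = 0.
Proof.
rewrite dotvE => H; apply/matrixP => i j; rewrite ord1 mxE.
have P0 : forall l : 'I_d, xpredT l -> 0 <= u l 0 * u l 0.
  by move=> l _; rewrite -expr2 sqr_ge0.
have /eqP := @psumr_eq0P _ _ xpredT (fun i => u i 0 * u i 0) P0 H i isT.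
by rewrite mulf_eq0 orbb => /eqP.
Qed.

End H.

Theorem lemma2 (R : realType) (d k : nat) (c : nat -> R) (pstar : nat)
  (v : 'I_k -> 'cV[R]_d) (beta : R) :
  (1 <= pstar)%N ->
  (forall p, (p < pstar)%N -> c p = 0) ->
  (forall p, (pstar <= p)%N -> 0 <= c p) ->
  0 < c pstar ->
  (forall w : 'cV[R]_d, normv w = 1 -> forall i, cvgn (series (grad_term c v w i))) ->
  (forall j, normv (v j) = 1) ->
  (forall i j, i != j -> dotv (v i) (v j) = beta) ->
  0 <= beta <= 1 ->
  let wbar := (normv (\sum_(j < k) v j))^-1 *: (\sum_(j < k) v j) in
  (1%:M - wbar *m wbar^T) *m gradL c v wbar = 0.
Proof.
move=> _ _ _ _ Hcvg Hn Hb _ wbar.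
set s := \sum_(j < k) v j.
set n := normv s.
have Hvv j : dotv (v j) (v j) = 1.
  have := Hn j; rewrite /normv => H.
  by rewrite -(sqr_sqrtr (dotv_ge0 (v j))) H expr1n.
set K := 1 + beta *+ k.-1.
have Hvs j : dotv (v j) s = K.
  rewrite /s dotv_sumr (bigD1 j) //= Hvv.
  rewrite (eq_bigr (fun _ => beta)); last by move=> l hl; rewrite dotvC Hb.
  by rewrite sumr_const cardC1 card_ord.
set a := n^-1 * K.
have Hvw j : dotv (v j) wbar = a by rewrite /wbar dotvZr Hvs.
set g := fun p : nat => - (p%:R * c p * a ^+ p.-1).
have Hgt i : grad_term c v wbar i = fun p => g p * s i 0.
  apply: funext => p; rewrite /grad_term /g.
  under eq_bigr do rewrite Hvw.
  by rewrite -mulr_sumr /s summxE mulNr !mulrA.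
set G := limn (series g).
have Hser (x : R) : series (fun p => g p * x) = (fun m => series g m * x).
  by apply: funext => m; rewrite /series /= mulr_suml.
have Hss : s != 0 -> 0 < n /\ n ^+ 2 = dotv s s.
  move=> sn0; have h0 := dotv_ge0 s.
  split; last by rewrite sqr_sqrtr.
  rewrite sqrtr_gt0 lt_def h0 andbT; apply/eqP => /dotv_eq0; exact/eqP.
have Hnw : s != 0 -> normv wbar = 1.
  move=> /Hss [n0 n2]; rewrite /normv /wbar dotvZl dotvZr -n2 -/n.
  by rewrite mulrA -expr2 exprVn mulVf ?sqrtr1 // expf_neq0 // gt_eqF.
have HG : gradL c v wbar = G *: s.
  apply/matrixP => i j; rewrite ord1 !mxE Hgt Hser.
  have [->|sne] := eqVneq (s i 0) 0.
    by rewrite mulr0; under eq_fun do rewrite mulr0; rewrite lim_cst.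
  have s0 : s != 0 by apply: contra_neq sne => ->; rewrite mxE.
  have := Hcvg wbar (Hnw s0) i; rewrite Hgt Hser => cv.
  have cg : cvgn (series g).
    have : cvgn (fun m => series g m * s i 0 * (s i 0)^-1).
      by apply: is_cvgM => //; exact: is_cvg_cst.
    by under eq_fun do rewrite mulfK //.
  rewrite limM //; last exact: is_cvg_cst.
  by rewrite lim_cst.
rewrite HG.
have [->|s0] := eqVneq s 0; first by rewrite scaler0 mulmx0.
have [n0 n2] := Hss s0.
rewrite mulmxBl mul1mx -mulmxA [wbar^T *m _]mx11_scalar mul_mx_scalar.
have -> : (wbar^T *m (G *: s)) 0 0 = dotv wbar (G *: s) by [].
rewrite dotvZr {1}/wbar dotvZl -n2 /wbar scalerA.
apply/eqP; rewrite subr_eq0; apply/eqP; congr (_ *: s).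
rewrite -/s -/n.
by field; rewrite gt_eqF.
Qed.
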